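(* Let $\mathcal X$ be a linear Abelian category over a field $\mathbb F$. Then the category of tempered persistence objects in $\mathcal X$ is Krull–Schmidt.
   Context: An additive category is linear over $\mathbb F$ if each $\mathrm{Hom}(X,Y)$ is a finite-dimensional $\mathbb F$-vector space and composition is $\mathbb F$-bilinear. A persistence object in $\mathcal X$ is a diagram $(X_p, \phi_p:X_{p}\to X_{p+1})_{p\in\mathbb Z}$ in $\mathcal X$; a morphism $(X_p)\to(X'_p)$ is a family of morphisms $f_p:X_p\to X'_p$ with $f_{p+1}\circ\phi_p=\phi'_p\circ f_p$ for all $p$. A persistence object is tempered if all but finitely many of the arrows $\phi_p$ are isomorphisms. An object of an additive category is indecomposable if it is nonzero and not isomorphic to a direct sum of two nonzero objects. A ring is local if $1\neq 0$ and for every element $f$, if $f$ is not invertible then $1-f$ is invertible. An additive category is Krull–Schmidt if every object is isomorphic to a finite direct sum of indecomposable objects and every indecomposable object has a local endomorphism ring. *)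

(* Defs.v *)
From HB Require Import structures.
From mathcomp Require Import all_boot all_order all_algebra.
Set Implicit Arguments.
Unset Strict Implicit.
Unset Printing Implicit Defensive.
Import GRing.Theory.
Local Open Scope ring_scope.

Record LinCat (F : fieldType) := {
  Ob : Type;
  Hom : Ob -> Ob -> vectType F;
  comp : forall X Y Z : Ob, Hom Y Z -> Hom X Y -> Hom X Z;
  idm : forall X : Ob, Hom X X;
  compA : forall X Y Z W (h : Hom Z W) (g : Hom Y Z) (f : Hom X Y),
      comp h (comp g f) = comp (comp h g) f;
  comp1m : forall X Y (f : Hom X Y), comp (idm Y) f = f;
  compm1 : forall X Y (f : Hom X Y), comp f (idm X) = f;
  comp_linl : forall X Y Z (a : F) (g1 g2 : Hom Y Z) (f : Hom X Y),
      comp (a *: g1 + g2) f = a *: comp g1 f + comp g2 f;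
  comp_linr : forall X Y Z (a : F) (g : Hom Y Z) (f1 f2 : Hom X Y),
      comp g (a *: f1 + f2) = a *: comp g f1 + comp g f2
}.

Arguments Ob {F}.
Arguments Hom {F} l _ _.
Arguments comp {F l X Y Z}.
Arguments idm {F l}.

Section AbelianDefs.
Variables (F : fieldType) (C : LinCat F).

Definition is_kernel (X Y K : Ob C) (f : Hom C X Y) (k : Hom C K X) : Prop :=
  comp f k = 0 /\
  forall W (g : Hom C W X), comp f g = 0 ->
    exists h : Hom C W K, comp k h = g /\ forall h', comp k h' = g -> h' = h.

Definition is_cokernel (X Y Q : Ob C) (f : Hom C X Y) (q : Hom C Y Q) : Prop :=
  comp q f = 0 /\
  forall W (g : Hom C Y W), comp g f = 0 ->
    exists h : Hom C Q W, comp h q = g /\ forall h', comp h' q = g -> h' = h.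

Definition is_mono (X Y : Ob C) (f : Hom C X Y) : Prop :=
  forall W (g h : Hom C W X), comp f g = comp f h -> g = h.

Definition is_epi (X Y : Ob C) (f : Hom C X Y) : Prop :=
  forall W (g h : Hom C Y W), comp g f = comp h f -> g = h.

Definition is_iso (X Y : Ob C) (f : Hom C X Y) : Prop :=
  exists g : Hom C Y X, comp g f = idm X /\ comp f g = idm Y.

End AbelianDefs.

Record LinAbCat (F : fieldType) := {
  lcat :> LinCat F;
  zero_obj : exists Z : Ob lcat, forall X : Ob lcat,
      (forall f g : Hom lcat Z X, f = g) /\ (forall f g : Hom lcat X Z, f = g);
  biprod : forall A B : Ob lcat, exists (S : Ob lcat)
      (i1 : Hom lcat A S) (i2 : Hom lcat B S) (p1 : Hom lcat S A) (p2 : Hom lcat S B),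
      [/\ comp p1 i1 = idm A, comp p2 i2 = idm B, comp p1 i2 = 0, comp p2 i1 = 0
        & comp i1 p1 + comp i2 p2 = idm S];
  has_kernels : forall (X Y : Ob lcat) (f : Hom lcat X Y),
      exists (K : Ob lcat) (k : Hom lcat K X), is_kernel f k;
  has_cokernels : forall (X Y : Ob lcat) (f : Hom lcat X Y),
      exists (Q : Ob lcat) (q : Hom lcat Y Q), is_cokernel f q;
  mono_kernel : forall (X Y : Ob lcat) (f : Hom lcat X Y), is_mono f ->
      exists (Z : Ob lcat) (g : Hom lcat Y Z), is_kernel g f;
  epi_cokernel : forall (X Y : Ob lcat) (f : Hom lcat X Y), is_epi f ->
      exists (W : Ob lcat) (g : Hom lcat W X), is_cokernel g f
}.

Section Persistence.
Variables (F : fieldType) (C : LinCat F).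

Record pobj := PObj {
  pX : int -> Ob C;
  pphi : forall p : int, Hom C (pX p) (pX (p + 1))
}.

Definition tempered (P : pobj) : Prop :=
  exists s : seq int, forall p : int, p \notin s -> is_iso (pphi P p).

Definition pfam (P Q : pobj) := forall p : int, Hom C (pX P p) (pX Q p).

Definition is_pmor (P Q : pobj) (f : pfam P Q) : Prop :=
  forall p : int, comp (f (p + 1)) (pphi P p) = comp (pphi Q p) (f p).

Definition peq (P Q : pobj) (f g : pfam P Q) : Prop := forall p, f p = g p.
Definition pcomp (P Q R : pobj) (g : pfam Q R) (f : pfam P Q) : pfam P R :=
  fun p => comp (g p) (f p).
Definition pid (P : pobj) : pfam P P := fun p => idm (pX P p).
Definition pzero (P Q : pobj) : pfam P Q := fun p => 0.

Definition p_iso (P Q : pobj) : Prop :=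
  exists (f : pfam P Q) (g : pfam Q P), [/\ is_pmor f, is_pmor g,
    peq (pcomp g f) (pid P) & peq (pcomp f g) (pid Q)].

Definition pis_zero (P : pobj) : Prop :=
  forall Q : pobj, tempered Q ->
    ((exists f : pfam P Q, is_pmor f) /\
     forall f g : pfam P Q, is_pmor f -> is_pmor g -> peq f g) /\
    ((exists f : pfam Q P, is_pmor f) /\
     forall f g : pfam Q P, is_pmor f -> is_pmor g -> peq f g).

Definition is_dsum (S : pobj) (n : nat) (Y : 'I_n -> pobj)
    (i : forall k, pfam (Y k) S) (pr : forall k, pfam S (Y k)) : Prop :=
  [/\ forall k, is_pmor (i k) /\ is_pmor (pr k),
      forall k, peq (pcomp (pr k) (i k)) (pid (Y k)),
      forall k l, k != l -> peq (pcomp (pr k) (i l)) (pzero (Y l) (Y k))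
    & forall p, \sum_(k < n) comp (i k p) (pr k p) = idm (pX S p)].

Definition is_dsum2 (S A B : pobj) (i1 : pfam A S) (i2 : pfam B S)
    (p1 : pfam S A) (p2 : pfam S B) : Prop :=
  [/\ is_pmor i1 /\ is_pmor i2 /\ is_pmor p1 /\ is_pmor p2,
      peq (pcomp p1 i1) (pid A) /\ peq (pcomp p2 i2) (pid B),
      peq (pcomp p1 i2) (pzero B A) /\ peq (pcomp p2 i1) (pzero A B)
    & forall p, comp (i1 p) (p1 p) + comp (i2 p) (p2 p) = idm (pX S p)].

Definition indecomposable (P : pobj) : Prop :=
  ~ pis_zero P /\
  ~ (exists (S A B : pobj) (i1 : pfam A S) (i2 : pfam B S)
        (p1 : pfam S A) (p2 : pfam S B),
       tempered S /\ tempered A /\ tempered B /\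
       ~ pis_zero A /\ ~ pis_zero B /\
       is_dsum2 i1 i2 p1 p2 /\ p_iso P S).

Definition pinvertible (P : pobj) (f : pfam P P) : Prop :=
  exists g : pfam P P, [/\ is_pmor g, peq (pcomp g f) (pid P) & peq (pcomp f g) (pid P)].

Definition one_minus (P : pobj) (f : pfam P P) : pfam P P :=
  fun p => idm (pX P p) - f p.

Definition local_End (P : pobj) : Prop :=
  ~ peq (pid P) (pzero P P) /\
  forall f : pfam P P, is_pmor f -> ~ pinvertible f -> pinvertible (one_minus f).

Definition tempered_KrullSchmidt : Prop :=
  (forall P : pobj, tempered P ->
     exists (n : nat) (Y : 'I_n -> pobj) (S : pobj)
            (i : forall k, pfam (Y k) S) (pr : forall k, pfam S (Y k)),
       [/\ forall k, tempered (Y k) /\ indecomposable (Y k),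
           tempered S, is_dsum i pr & p_iso P S]) /\
  (forall P : pobj, tempered P -> indecomposable P -> local_End P).

End Persistence.

(* Main.v *)
From HB Require Import structures.
Require Import Defs.
From mathcomp Require Import all_boot all_order all_algebra.
From Stdlib Require Import ClassicalEpsilon Classical.
Require Import Defs.
Set Implicit Arguments.
Unset Strict Implicit.
Unset Printing Implicit Defensive.
Import GRing.Theory.
Local Open Scope ring_scope.

Definition cid := constructive_indefinite_description.
Arguments cid {A P}.

Section Basics.
Variables (F : fieldType) (C : LinCat F).

Definition rcompf (X Y Z : Ob C) (f : Hom C X Y) := fun g : Hom C Y Z => comp g f.
Definition lcompf (X Y Z : Ob C) (g : Hom C Y Z) := fun f : Hom C X Y => comp g f.

Lemma rcompf_lin X Y Z (f : Hom C X Y) : linear (@rcompf X Y Z f).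
Proof. by move=> a u v; rewrite /rcompf comp_linl. Qed.
Lemma lcompf_lin X Y Z (g : Hom C Y Z) : linear (@lcompf X Y Z g).
Proof. by move=> a u v; rewrite /lcompf comp_linr. Qed.

HB.instance Definition _ X Y Z f := GRing.isLinear.Build F _ _ _ (@rcompf X Y Z f) (rcompf_lin f).
HB.instance Definition _ X Y Z g := GRing.isLinear.Build F _ _ _ (@lcompf X Y Z g) (lcompf_lin g).

Lemma comp0l X Y Z (f : Hom C X Y) : comp (0 : Hom C Y Z) f = 0.
Proof. exact: (linear0 (rcompf f)). Qed.
Lemma comp0r X Y Z (g : Hom C Y Z) : comp g (0 : Hom C X Y) = 0.
Proof. exact: (linear0 (lcompf g)). Qed.
Lemma compDl X Y Z (f : Hom C X Y) (g1 g2 : Hom C Y Z) : comp (g1 + g2) f = comp g1 f + comp g2 f.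
Proof. exact: (linearD (rcompf f)). Qed.
Lemma compDr X Y Z (g : Hom C Y Z) (f1 f2 : Hom C X Y) : comp g (f1 + f2) = comp g f1 + comp g f2.
Proof. exact: (linearD (lcompf g)). Qed.
Lemma compBl X Y Z (f : Hom C X Y) (g1 g2 : Hom C Y Z) : comp (g1 - g2) f = comp g1 f - comp g2 f.
Proof. exact: (linearB (rcompf f)). Qed.
Lemma compBr X Y Z (g : Hom C Y Z) (f1 f2 : Hom C X Y) : comp g (f1 - f2) = comp g f1 - comp g f2.
Proof. exact: (linearB (lcompf g)). Qed.
Lemma compZl X Y Z (f : Hom C X Y) a (g : Hom C Y Z) : comp (a *: g) f = a *: comp g f.
Proof. by rewrite -[a *: g]addr0 comp_linl comp0l addr0. Qed.
Lemma compZr X Y Z (g : Hom C Y Z) a (f : Hom C X Y) : comp g (a *: f) = a *: comp g f.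
Proof. by rewrite -[a *: f]addr0 comp_linr comp0r addr0. Qed.
Lemma compNl X Y Z (f : Hom C X Y) (g : Hom C Y Z) : comp (- g) f = - comp g f.
Proof. exact: (linearN (rcompf f)). Qed.
Lemma compNr X Y Z (g : Hom C Y Z) (f : Hom C X Y) : comp g (- f) = - comp g f.
Proof. exact: (linearN (lcompf g)). Qed.
Lemma compsuml X Y Z (f : Hom C X Y) I (r : seq I) (P : pred I) (g : I -> Hom C Y Z) :
  comp (\sum_(i <- r | P i) g i) f = \sum_(i <- r | P i) comp (g i) f.
Proof. exact: (linear_sum (rcompf f)). Qed.
Lemma compsumr X Y Z (g : Hom C Y Z) I (r : seq I) (P : pred I) (f : I -> Hom C X Y) :
  comp g (\sum_(i <- r | P i) f i) = \sum_(i <- r | P i) comp g (f i).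
Proof. exact: (linear_sum (lcompf g)). Qed.

End Basics.

Section Split.
Variables (F : fieldType) (C : LinAbCat F).

Lemma split_idem (X : Ob C) (e : Hom C X X) : comp e e = e ->
  exists (Y : Ob C) (kr : Hom C Y X * Hom C X Y),
    comp kr.2 kr.1 = idm Y /\ comp kr.1 kr.2 = e.
Proof.
move=> ee.
have [K [k [k0 kU]]] := @has_kernels F C X X (idm X - e).
have k0' : comp e k = k.
  by move/eqP: k0; rewrite compBl comp1m subr_eq0 => /eqP <-.
have [r [kr _]] : exists h : Hom C X K, comp k h = e /\ forall h', comp k h' = e -> h' = h.
  by apply: kU; rewrite compBl comp1m ee subrr.
exists K, (k, r) => /=; split=> //.
have [h [_ hu]] := kU K k k0.
rewrite (hu (comp r k)); last by rewrite compA kr.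
by rewrite (hu (idm K)) // compm1.
Qed.

Lemma choice_split (X : int -> Ob C) (e : forall p, Hom C (X p) (X p)) :
  (forall p, comp (e p) (e p) = e p) ->
  exists (Y : int -> Ob C) (k : forall p, Hom C (Y p) (X p)) (r : forall p, Hom C (X p) (Y p)),
    (forall p, comp (r p) (k p) = idm (Y p)) /\ (forall p, comp (k p) (r p) = e p).
Proof.
move=> ie.
have H p := split_idem (ie p).
exists (fun p => proj1_sig (cid (H p))).
exists (fun p => (proj1_sig (cid (proj2_sig (cid (H p))))).1).
exists (fun p => (proj1_sig (cid (proj2_sig (cid (H p))))).2).
split=> p; [exact: (proj1 (proj2_sig (cid (proj2_sig (cid (H p))))))|exact: (proj2 (proj2_sig (cid (proj2_sig (cid (H p))))))].
Qed.

Definition idem (P : pobj C) (e : pfam P P) := forall p, comp (e p) (e p) = e p.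

Lemma pidem_split (P : pobj C) (e : pfam P P) : is_pmor e -> idem e ->
  exists (A : pobj C) (k : pfam A P) (r : pfam P A),
  [/\ is_pmor k, is_pmor r, forall p, comp (r p) (k p) = idm (pX A p),
      forall p, comp (k p) (r p) = e p
    & forall p, is_iso (pphi P p) -> is_iso (pphi A p)].
Proof.
move=> pe ie.
have [Y [k [r [hk he]]]] := choice_split ie.
have ek p : comp (e p) (k p) = k p by rewrite -he -compA hk compm1.
have re p : comp (r p) (e p) = r p by rewrite -he compA hk comp1m.
exists (PObj (fun p => comp (r (p + 1)) (comp (pphi P p) (k p)))).
exists k, r; split => //.
- move=> p /=; by rewrite compA he compA pe -compA ek.
- move=> p /=; by rewrite -!compA he -pe compA re.
- move=> p /= [g [g1 g2]].
  have ge : comp g (e (p + 1)) = comp (e p) g.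
    rewrite -[LHS]compm1 -g2 !compA -[comp (comp g _) _]compA pe.
    by rewrite compA g1 comp1m.
  exists (comp (r p) (comp g (k (p + 1)))); split.
  + rewrite -!compA [comp (k (p+1)) _]compA he [comp (e (p+1)) _]compA pe.
    by rewrite -compA ek [comp g _]compA g1 comp1m hk.
  + rewrite -!compA [comp (k p) _]compA he [comp (e p) _]compA -ge -compA ek.
    by rewrite [comp (pphi P p) _]compA g2 comp1m hk.
Qed.

End Split.

Section Zero.
Variables (F : fieldType) (C : LinAbCat F).

Lemma pmor_id (P : pobj C) : is_pmor (pid P).
Proof. by move=> p; rewrite /pid comp1m compm1. Qed.
Lemma pmor_zero (P Q : pobj C) : is_pmor (pzero P Q).
Proof. by move=> p; rewrite /pzero comp0l comp0r. Qed.
Lemma pmor_comp (P Q R : pobj C) (g : pfam Q R) (f : pfam P Q) :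
  is_pmor g -> is_pmor f -> is_pmor (pcomp g f).
Proof. by move=> hg hf p; rewrite /pcomp -compA hf compA hg compA. Qed.
Lemma pmor_sub (P Q : pobj C) (f g : pfam P Q) :
  is_pmor f -> is_pmor g -> is_pmor (fun p => f p - g p).
Proof. by move=> hf hg p; rewrite compBl compBr hf hg. Qed.
Lemma pmor_one_minus (P : pobj C) (f : pfam P P) : is_pmor f -> is_pmor (one_minus f).
Proof. by move=> hf; apply: pmor_sub => //; apply: pmor_id. Qed.

Lemma zero_of_id0 (P : pobj C) : peq (pid P) (pzero P P) -> pis_zero P.
Proof.
move=> h0 Q _; have h p : idm (pX P p) = 0 := h0 p; split; split.
- by exists (pzero P Q); apply: pmor_zero.
- move=> f g _ _ p; by rewrite -[f p]compm1 -[g p]compm1 h !comp0r.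
- by exists (pzero Q P); apply: pmor_zero.
- move=> f g _ _ p; by rewrite -[f p]comp1m -[g p]comp1m h !comp0l.
Qed.

Lemma id0_of_zero (P : pobj C) : tempered P -> pis_zero P -> peq (pid P) (pzero P P).
Proof.
move=> tP /(_ P tP) [[_ u] _]; apply: u; [exact: pmor_id | exact: pmor_zero].
Qed.

Lemma indec_of_idem (Q : pobj C) : tempered Q -> ~ peq (pid Q) (pzero Q Q) ->
  (forall e : pfam Q Q, is_pmor e -> idem e -> peq e (pzero Q Q) \/ peq e (pid Q)) ->
  indecomposable Q.
Proof.
move=> tQ nz hid; split.
  by move=> z; apply: nz; apply: id0_of_zero.
move=> [S [A [B [i1 [i2 [p1 [p2 [tS [tA [tB [nA [nB [hds [f [g [mf mg gf fg]]]]]]]]]]]]]]]].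
case: hds => [[mi1 [mi2 [mp1 mp2]]] [h11 h22] [h12 h21] _].
have {}fg p : comp (f p) (g p) = idm _ := fg p.
have {}h11 p : comp (p1 p) (i1 p) = idm _ := h11 p.
have {}h22 p : comp (p2 p) (i2 p) = idm _ := h22 p.
have {}h21 p : comp (p2 p) (i1 p) = 0 := h21 p.
pose e := pcomp g (pcomp i1 (pcomp p1 f)).
have me : is_pmor e by do 3! apply: pmor_comp => //.
have ie : idem e.
  move=> p; rewrite /e /pcomp -!compA [comp (f p) (comp (g p) _)]compA.
  rewrite (fg p) comp1m [comp (p1 p) (comp (i1 p) _)]compA (h11 p) comp1m.
  by [].
have fge p : comp (f p) (comp (e p) (g p)) = comp (i1 p) (p1 p).
  rewrite /e /pcomp -!compA [comp (f p) (g p)]fg compm1.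
  by rewrite compA fg comp1m.
case: (hid e me ie) => he.
- apply: nA; apply: zero_of_id0 => p.
  rewrite /pid /pzero -(h11 p) -[comp (p1 p) (i1 p)]comp1m -(h11 p).
  rewrite -compA [comp (i1 p) (comp (p1 p) _)]compA -fge (he p) /pzero comp0l.
  by rewrite comp0r comp0l comp0r.
- apply: nB; apply: zero_of_id0 => p.
  have ip : comp (i1 p) (p1 p) = idm _ by rewrite -fge (he p) /pid comp1m fg.
  rewrite /pid /pzero -(h22 p) -[i2 p]comp1m -ip compA.
  by rewrite [comp (p2 p) (comp _ _)]compA (h21 p) !comp0l.
Qed.


Lemma idem_one_minus (P : pobj C) (e : pfam P P) : idem e -> idem (one_minus e).
Proof.
by move=> ie p; rewrite /one_minus compBl comp1m compBr compm1 ie subrr subr0.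
Qed.

Lemma idem_of_indec (P : pobj C) : tempered P -> indecomposable P ->
  forall e : pfam P P, is_pmor e -> idem e -> peq e (pzero P P) \/ peq e (pid P).
Proof.
move=> tP [_ nd] e me ie.
apply: NNPP => hn; apply: nd.
have n0 : ~ peq e (pzero P P) by move=> h; apply: hn; left.
have n1 : ~ peq e (pid P) by move=> h; apply: hn; right.
pose e' := one_minus e.
have me' : is_pmor e' by apply: pmor_one_minus.
have ie' : idem e' by apply: idem_one_minus.
have [A [kA [rA [mkA mrA hA1 hA2 isoA]]]] := pidem_split me ie.
have [B [kB [rB [mkB mrB hB1 hB2 isoB]]]] := pidem_split me' ie'.
have tA : tempered A by case: tP => s hs; exists s => p /hs; apply: isoA.
have tB : tempered B by case: tP => s hs; exists s => p /hs; apply: isoB.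
have reA p : comp (rA p) (e p) = rA p by rewrite -hA2 compA hA1 comp1m.
have ekA p : comp (e p) (kA p) = kA p by rewrite -hA2 -compA hA1 compm1.
have reB p : comp (rB p) (e' p) = rB p by rewrite -hB2 compA hB1 comp1m.
have ekB p : comp (e' p) (kB p) = kB p by rewrite -hB2 -compA hB1 compm1.
have ee' p : comp (e p) (e' p) = 0 by rewrite /e' /one_minus compBr compm1 ie subrr.
have e'e p : comp (e' p) (e p) = 0 by rewrite /e' /one_minus compBl comp1m ie subrr.
exists P, A, B, kA, kB, rA, rB.
split; first exact: tP.
split; first exact: tA.
split; first exact: tB.
split.
  move=> zA; apply: n0 => p.
  by rewrite /pzero -hA2 -[rA p]comp1m (id0_of_zero tA zA p : idm _ = 0) comp0l comp0r.
split.
  move=> zB; apply: n1 => p.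
  have h : e' p = 0.
    by rewrite -hB2 -[rB p]comp1m (id0_of_zero tB zB p : idm _ = 0) comp0l comp0r.
  by move/eqP: h; rewrite /e' /one_minus subr_eq0 => /eqP <-.
split.
  split.
  - by split; [|split; [|split]].
  - by split=> p; [exact (hA1 p) | exact (hB1 p)].
  - split=> p; rewrite /pcomp /pzero.
      by rewrite -reA -ekB -compA [comp (e p) (comp _ _)]compA ee' comp0l comp0r.
    by rewrite -reB -ekA -compA [comp (e' p) (comp _ _)]compA e'e comp0l comp0r.
  - by move=> p; rewrite hA2 hB2 /e' /one_minus addrC subrK.
exists (pid P), (pid P); split; try apply: pmor_id; by move=> p; rewrite /pcomp /pid comp1m.
Qed.

End Zero.

From mathcomp Require Import zify ring.

Section ERing.
Variables (F : fieldType) (C : LinCat F) (X : Ob C).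

Definition ER : Type := (Hom C X X * F^o)%type.
HB.instance Definition _ := GRing.Lmodule.on ER.

Definition ERmul (x y : ER) : ER := (comp x.1 y.1, x.2 * y.2).
Definition ERone : ER := (idm X, 1).

Lemma ERmulA : associative ERmul.
Proof. by move=> [x1 x2] [y1 y2] [z1 z2]; rewrite /ERmul /= compA mulrA. Qed.
Lemma ERmul1 : left_id ERone ERmul.
Proof. by move=> [x1 x2]; rewrite /ERmul /= comp1m mul1r. Qed.
Lemma ERmulr1 : right_id ERone ERmul.
Proof. by move=> [x1 x2]; rewrite /ERmul /= compm1 mulr1. Qed.
Lemma ERmulDl : left_distributive ERmul +%R.
Proof. by move=> [x1 x2] [y1 y2] [z1 z2]; rewrite /ERmul /= compDl mulrDl. Qed.
Lemma ERmulDr : right_distributive ERmul +%R.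
Proof. by move=> [x1 x2] [y1 y2] [z1 z2]; rewrite /ERmul /= compDr mulrDr. Qed.
Lemma ERone_neq0 : ERone != 0.
Proof. by apply/eqP => -[_] /eqP; rewrite oner_eq0. Qed.

HB.instance Definition _ := GRing.Zmodule_isNzRing.Build ER
  ERmulA ERmul1 ERmulr1 ERmulDl ERmulDr ERone_neq0.

Lemma ERscalerAl (a : F) (u v : ER) : a *: (u * v) = (a *: u) * v.
Proof.
case: u v => [u1 u2] [v1 v2]; by rewrite /GRing.mul /= /ERmul /= compZl -scalerAl.
Qed.
HB.instance Definition _ := GRing.Lmodule_isLalgebra.Build F ER ERscalerAl.
Lemma ERscalerAr (a : F) (u v : ER) : a *: (u * v) = u * (a *: v).
Proof.
by case: u v => [u1 u2] [v1 v2]; rewrite /GRing.mul /= /ERmul /= compZr -scalerAr.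
Qed.
HB.instance Definition _ := GRing.LSemiAlgebra_isSemiAlgebra.Build F ER ERscalerAr.

Definition pev (a : Hom C X X) (q : {poly F}) : Hom C X X :=
  (horner_alg ((a, 0) : ER) q).1.

Lemma pevD a q r : pev a (q + r) = pev a q + pev a r.
Proof. by rewrite /pev rmorphD. Qed.
Lemma pevB a q r : pev a (q - r) = pev a q - pev a r.
Proof. by rewrite /pev rmorphB. Qed.
Lemma pev0 a : pev a 0 = 0.
Proof. by rewrite /pev rmorph0. Qed.
Lemma pevM a q r : pev a (q * r) = comp (pev a q) (pev a r).
Proof. by rewrite /pev rmorphM. Qed.
Lemma pevC a c : pev a c%:P = c *: idm X.
Proof. by rewrite /pev horner_algC. Qed.
Lemma pev1 a : pev a 1 = idm X.
Proof. by rewrite -[1]/(1%:P) pevC scale1r. Qed.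
Lemma pevX a : pev a 'X = a.
Proof. by rewrite /pev horner_algX. Qed.
Lemma pevZ a c q : pev a (c *: q) = c *: pev a q.
Proof. by rewrite -mul_polyC pevM pevC compZl comp1m. Qed.
Lemma pev_sum a I (r : seq I) (P : pred I) (q : I -> {poly F}) :
  pev a (\sum_(i <- r | P i) q i) = \sum_(i <- r | P i) pev a (q i).
Proof. by rewrite /pev rmorph_sum /= (big_morph fst (fun _ _ => erefl) erefl). Qed.
Lemma pev_comm_self a q r : comp (pev a q) (pev a r) = comp (pev a r) (pev a q).
Proof. by rewrite -!pevM mulrC. Qed.

End ERing.

Section Fitting.
Variables (F : fieldType) (C : LinAbCat F).

Lemma pev_comm (X Y : Ob C) (a : Hom C X X) (b : Hom C Y Y) (f : Hom C X Y) :
  comp b f = comp f a -> forall q, comp (pev b q) f = comp f (pev a q).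
Proof.
move=> h; elim/poly_ind => [|q c IH]; first by rewrite !pev0 comp0l comp0r.
rewrite !pevD !pevM !pevX !pevC compDl compDr -compA h compA IH -compA.
by rewrite compZl compZr comp1m compm1.
Qed.

Lemma ann_exists (X : Ob C) (a : Hom C X X) : exists q : {poly F}, q != 0 /\ pev a q = 0.
Proof.
pose d := \dim (fullv : {vspace Hom C X X}).
pose T := [tuple pev a 'X^i | i < d.+1].
have nf : ~~ free T.
  rewrite /free size_tuple; apply/negP => /eqP h.
  by have := dimvS (subvf <<T>>%VS); rewrite h -/d ltnn.
have [k [hs [i hi]]] : exists k : 'I_d.+1 -> F,
    \sum_(i < d.+1) k i *: T`_i = 0 /\ exists i, k i != 0.
  apply: NNPP => hn; apply: (negP nf); apply/freeP => k hs i.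
  apply: NNPP => hki; apply: hn; exists k; split => //; exists i; exact/eqP.
exists (\poly_(j < d.+1) k (inord j)); split.
  apply/eqP => /(congr1 (fun q : {poly F} => q`_i)).
  by rewrite coef_poly ltn_ord inord_val coef0; apply/eqP.
rewrite poly_def pev_sum -[RHS]hs; apply: eq_bigr => j _.
by rewrite pevZ inord_val nth_mktuple.
Qed.

Lemma window (s : seq int) : exists W : seq int, forall (good Q : int -> Prop),
  (forall p, p \notin s -> good p) ->
  (forall p, good p -> Q p -> Q (p + 1)) ->
  (forall p, good p -> Q (p + 1) -> Q p) ->
  (forall p, p \in W -> Q p) -> forall p, Q p.
Proof.
have hB : forall (s : seq int) x, x \in s -> (absz x <= \sum_(y <- s) absz y)%N.
  elim=> //= y s' IH x; rewrite in_cons big_cons => /orP [/eqP -> | /IH h].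
    exact: leq_addr.
  exact: leq_trans h (leq_addl _ _).
pose Bd : nat := \sum_(y <- s) absz y.
exists [seq (i%:Z - Bd%:Z) | i <- iota 0 (2 * Bd).+2].
move=> good Q hg hup hdn hW.
have inW p : - Bd%:Z <= p <= Bd%:Z + 1 -> Q p.
  move=> hp; apply: hW; apply/mapP; exists (absz (p + Bd%:Z)).
    rewrite mem_iota; lia.
  lia.
have gout p : (p < - Bd%:Z) \/ (Bd%:Z < p) -> good p.
  move=> hp; apply: hg; apply/negP => /hB h.
  have : (absz p <= Bd)%N by exact: h.
  move=> h'; case: hp => hp; lia.
have lowQ n : Q (- Bd%:Z - n%:Z).
  elim: n => [|n IH]; first by apply: inW; lia.
  apply: hdn; first by apply: gout; left; lia.
  by have -> : - Bd%:Z - n.+1%:Z + 1 = - Bd%:Z - n%:Z by lia.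
have highQ n : Q (Bd%:Z + 1 + n%:Z).
  elim: n => [|n IH]; first by apply: inW; lia.
  have -> : Bd%:Z + 1 + n.+1%:Z = (Bd%:Z + 1 + n%:Z) + 1 by lia.
  apply: hup => //; apply: gout; right; lia.
move=> p.
case: (boolP (p < - Bd%:Z)) => h1.
  by have -> : p = - Bd%:Z - (absz (- Bd%:Z - p))%:Z by lia.
case: (boolP (p <= Bd%:Z + 1)) => h2; first by apply: inW; lia.
have e : p = Bd%:Z + 1 + (absz (- (Bd%:Z + 1) + p))%:Z by lia.
by rewrite e.
Qed.


Lemma nil_inv (X : Ob C) (a : Hom C X X) m : pev a ('X^m) = 0 ->
  comp (idm X - a) (pev a (\sum_(i < m) 'X^i)) = idm X /\
  comp (pev a (\sum_(i < m) 'X^i)) (idm X - a) = idm X.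
Proof.
move=> h.
have e : (1 - 'X) * \sum_(i < m) 'X^i = 1 - 'X^m :> {poly F}.
  by rewrite -[1 - 'X^m]opprB subrX1 -mulNr opprB.
have ea : idm X - a = pev a (1 - 'X) by rewrite pevB pev1 pevX.
rewrite ea -!pevM [_ * (1 - _)]mulrC e pevB pev1 h subr0; by split.
Qed.

Lemma fitting (P : pobj C) : tempered P -> forall a : pfam P P, is_pmor a ->
  exists e : pfam P P, [/\ is_pmor e, idem e,
    (peq e (pzero P P) -> pinvertible (one_minus a)) &
    (peq e (pid P) -> pinvertible a)].
Proof.
move=> [s hs] a ma.
have [W hW] := window s.
have annf p := ann_exists (a p).
pose qf p := proj1_sig (cid (annf p)).
have hqf p : qf p != 0 /\ pev (a p) (qf p) = 0 := proj2_sig (cid (annf p)).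
pose Q := 'X * \prod_(p <- W) qf p.
have Qn0 : Q != 0.
  rewrite mulf_neq0 ?polyX_eq0 // prodf_seq_neq0; apply/allP => i _.
  exact: (proj1 (hqf i)).
have pevc (q : {poly F}) p : comp (pev (a (p + 1)) q) (pphi P p) = comp (pphi P p) (pev (a p) q).
  by apply: pev_comm; apply: ma.
have Qall p : pev (a p) Q = 0.
  apply: (hW (fun p => is_iso (pphi P p)) (fun p => pev (a p) Q = 0)) => //.
  - move=> p0 [g [g1 g2]] h0.
    by rewrite -[pev _ _]compm1 -g2 compA pevc h0 comp0r comp0l.
  - move=> p0 [g [g1 g2]] h1.
    by rewrite -[pev _ _]comp1m -g1 -compA -pevc h1 comp0l comp0r.
  - move=> p0 pW; rewrite /Q (big_rem _ pW) /= mulrCA pevM (proj2 (hqf p0)).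
    by rewrite comp0l.
case: (multiplicity_XsubC Q 0) => m [Q' hQ' eQ].
have rQ' : ~~ root Q' 0 by move/implyP: hQ'; apply.
have X0 : 'X - 0%:P = 'X :> {poly F} by rewrite polyC0 subr0.
rewrite X0 in eQ.
have m0 : (0 < m)%N.
  case: m eQ => // eQ; exfalso; move: rQ'; rewrite expr0 mulr1 in eQ; rewrite -eQ /Q.
  by rewrite /root hornerM hornerX mul0r eqxx.
have cop : coprimep Q' ('X^m).
  by rewrite -X0; apply: coprimep_expr; rewrite coprimep_XsubC.
have [[u1 u2] /= hu] := Bezout_eq1_coprimepP _ _ cop.
pose E := u2 * 'X^m. pose Fp := u1 * Q'.
have EF : E * Fp = (u1 * u2) * Q by rewrite eQ /E /Fp; ring.
have pevQ p r : pev (a p) (r * Q) = 0 by rewrite pevM Qall comp0r.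
have sEF p : pev (a p) E + pev (a p) Fp = idm _ by rewrite -pevD addrC hu pev1.
exists (fun p => pev (a p) E); split.
- by move=> p; apply: pevc.
- move=> p; rewrite -pevM.
  have E1 : E = 1 - Fp by rewrite -hu /E /Fp addrC addKr.
  have -> : E * E = E - E * Fp by rewrite {2}E1 mulrBr mulr1.
  by rewrite pevB EF pevQ subr0.
- move=> he.
  have hm p : pev (a p) 'X^m = 0.
    have -> : 'X^m = 'X^m * E + u1 * Q.
      by rewrite eQ -[LHS]mulr1 -hu /E /Fp; ring.
    by rewrite pevD pevM (he p) /pzero comp0r pevQ addr0.
  exists (fun p => pev (a p) (\sum_(i < m) 'X^i)); split.
  + by move=> p; apply: pevc.
  + by move=> p; rewrite /pcomp /one_minus (proj2 (nil_inv (hm p))).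
  + by move=> p; rewrite /pcomp /one_minus (proj1 (nil_inv (hm p))).
- move=> he.
  have hE p : pev (a p) E = idm _ := he p.
  exists (fun p => pev (a p) (u2 * 'X^(m.-1))); split.
  + by move=> p; apply: pevc.
  + move=> p; rewrite /pcomp /pid -{2}[a p]pevX -pevM -mulrA -exprSr prednK //.
  + move=> p; rewrite /pcomp /pid -{1}[a p]pevX -pevM mulrCA -exprS prednK //.
Qed.

End Fitting.

Section Decomp.
Variables (F : fieldType) (C : LinAbCat F).

Lemma local_of_indec (P : pobj C) : tempered P -> indecomposable P -> local_End P.
Proof.
move=> tP hP; split.
  by move=> h; case: hP => nz _; apply: nz; apply: zero_of_id0.
move=> f mf ninv.
have [e [me ie h0 h1]] := fitting tP mf.
case: (idem_of_indec tP hP me ie) => he; first exact: h0.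
by exfalso; apply: ninv; apply: h1.
Qed.

Definition Uv (X : Ob C) (x : Hom C X X) : {vspace Hom C X X} :=
  limg (linfun (@lcompf F C X X X x)).

Lemma memUv (X : Ob C) (x y : Hom C X X) : reflect (exists z, y = comp x z) (y \in Uv x).
Proof.
rewrite /Uv; apply: (iffP memv_imgP) => [[z _ ->] | [z ->]].
  by exists z; rewrite lfunE.
by exists z; rewrite ?memvf // lfunE.
Qed.

Lemma Uv_sub (X : Ob C) (e e' : Hom C X X) : comp e e' = e' -> (Uv e' <= Uv e)%VS.
Proof.
move=> h; apply/subvP => y /memUv [z ->]; apply/memUv; exists (comp e' z).
by rewrite compA h.
Qed.

Lemma Uv_strict (X : Ob C) (e e' : Hom C X X) : comp e e' = e' -> comp e' e = e' ->
  comp e' e' = e' -> e' <> e -> (\dim (Uv e') < \dim (Uv e))%N.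
Proof.
move=> h1 h2 h3 ne; rewrite ltn_neqAle dimvS ?Uv_sub // andbT.
apply/negP => /eqP hd; apply: ne.
have : (Uv e' == Uv e) by rewrite eqEdim Uv_sub // hd leqnn.
move/eqP => eU.
have : e \in Uv e by apply/memUv; exists (idm X); rewrite compm1.
rewrite -eU => /memUv [z ez].
by rewrite -h2 ez compA h3.
Qed.

Lemma pmor_det (P : pobj C) (f h : pfam P P) p : is_pmor f -> is_pmor h ->
  is_iso (pphi P p) -> (f p = h p <-> f (p + 1) = h (p + 1)).
Proof.
move=> mf mh [g [g1 g2]]; split => e.
  by rewrite -[f _]compm1 -[h _]compm1 -g2 !compA mf mh e.
by rewrite -[f _]comp1m -[h _]comp1m -g1 -!compA -mf -mh e.
Qed.

Definition ple (P : pobj C) (e' e : pfam P P) :=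
  peq (pcomp e e') e' /\ peq (pcomp e' e) e'.

Definition prim (P : pobj C) (e : pfam P P) :=
  ~ peq e (pzero P P) /\
  forall e', is_pmor e' -> idem e' -> ple e' e -> peq e' (pzero P P) \/ peq e' e.

Lemma sum_lt (W : seq int) (f g : int -> nat) :
  (forall p, p \in W -> (f p <= g p)%N) -> (exists2 p, p \in W & (f p < g p)%N) ->
  (\sum_(p <- W) f p < \sum_(p <- W) g p)%N.
Proof.
elim: W => [|x W IH] hle [p]; first by [].
rewrite in_cons big_cons big_cons => /orP [/eqP -> | pW] hp.
  rewrite -addSn; apply: leq_add hp _.
  by rewrite big_seq [X in (_ <= X)%N]big_seq; apply: leq_sum => i iW; apply: hle; rewrite in_cons iW orbT.
rewrite -addnS; apply: leq_add; first by apply: hle; rewrite in_cons eqxx.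
apply: IH; first by move=> i iW; apply: hle; rewrite in_cons iW orbT.
by exists p.
Qed.


Lemma split_lshift m n (i : 'I_m) : split (lshift n i) = inl i.
Proof. exact: (unsplitK (inl i : 'I_m + 'I_n)). Qed.
Lemma split_rshift m n (i : 'I_n) : split (rshift m i) = inr i.
Proof. exact: (unsplitK (inr i : 'I_m + 'I_n)). Qed.

Lemma ple_trans (P : pobj C) (x y z : pfam P P) : ple x y -> ple y z -> ple x z.
Proof.
move=> [h1 h2] [h3 h4].
have {}h1 p : comp (y p) (x p) = x p := h1 p.
have {}h2 p : comp (x p) (y p) = x p := h2 p.
have {}h3 p : comp (z p) (y p) = y p := h3 p.
have {}h4 p : comp (y p) (z p) = y p := h4 p.
split=> p; rewrite /pcomp.
  by rewrite -(h1 p) compA (h3 p).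
by rewrite -(h2 p) -compA (h4 p).
Qed.

Section Measure.
Variables (P : pobj C) (W : seq int).
Hypothesis det : forall f h : pfam P P, is_pmor f -> is_pmor h ->
  (forall p, p \in W -> f p = h p) -> peq f h.

Definition mu (e : pfam P P) := (\sum_(p <- W) \dim (Uv (e p)))%N.

Lemma mu_lt (e e' : pfam P P) : is_pmor e -> is_pmor e' -> idem e' ->
  ple e' e -> ~ peq e' e -> (mu e' < mu e)%N.
Proof.
move=> me me' ie' [l1 l2] ne.
apply: sum_lt.
  by move=> p _; apply: dimvS; apply: Uv_sub; apply: (l1 p).
apply: NNPP => hn; apply: ne; apply: det => // p pW.
apply: NNPP => hp; apply: hn; exists p => //.
by apply: Uv_strict; [exact: (l1 p) | exact: (l2 p) | exact: (ie' p) | exact: hp].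
Qed.

Lemma decomp_idem : forall n (e : pfam P P), (mu e < n)%N -> is_pmor e -> idem e ->
  exists (k : nat) (es : 'I_k -> pfam P P),
   [/\ forall i, [/\ is_pmor (es i), idem (es i) & prim (es i)],
       forall i j, i != j -> peq (pcomp (es i) (es j)) (pzero P P),
       forall i, ple (es i) e
     & forall p, \sum_(i < k) es i p = e p].
Proof.
elim=> // n IH e hn me ie.
case: (classic (peq e (pzero P P))) => [e0|en0].
  exists 0%N, (fun _ => pzero P P); split; try by case.
  by move=> p; rewrite big_ord0 (e0 p).
case: (classic (prim e)) => [pe|npe].
  exists 1%N, (fun _ => e); split.
  - by move=> _; split.
  - by move=> i j; rewrite !ord1 eqxx.
  - by move=> _; split=> p; apply: ie.
  - by move=> p; rewrite big_ord1.
have [e' [me' [ie' [le' [n1 n2]]]]] : exists e' : pfam P P, is_pmor e' /\ idem e' /\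
    ple e' e /\ ~ peq e' (pzero P P) /\ ~ peq e' e.
  apply: NNPP => hno; apply: npe; split => // e' me' ie' le'.
  apply: NNPP => h; apply: hno; exists e'; do !split => //.
  - by move=> h0; apply: h; left.
  - by move=> h0; apply: h; right.
case: le' => [l1 l2].
have {}l1 p : comp (e p) (e' p) = e' p := l1 p.
have {}l2 p : comp (e' p) (e p) = e' p := l2 p.
pose e'' := fun p => e p - e' p.
have me'' : is_pmor e'' by apply: pmor_sub.
have ie'' : idem e''.
  move=> p; rewrite /e'' compBl !compBr ie ie' l1 l2 subrr subr0 //.
have le'' : ple e'' e.
  split=> p; rewrite /pcomp /e''; first by rewrite compBr ie l1.
  by rewrite compBl ie l2.
have o1 p : comp (e' p) (e'' p) = 0 by rewrite /e'' compBr l2 ie' subrr.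
have o2 p : comp (e'' p) (e' p) = 0 by rewrite /e'' compBl l1 ie' subrr.
have n2'' : ~ peq e'' e.
  move=> h; apply: n1 => p.
  have hp : e p - e' p = e p - 0 by rewrite subr0; exact: (h p).
  by move/addrI/oppr_inj: hp.
have n1'' : ~ peq e'' (pzero P P).
  move=> h; apply: n2 => p; move: (h p); rewrite /e'' /pzero => /eqP.
  by rewrite subr_eq0 => /eqP.
have [k1 [es1 [h1a h1b h1c h1d]]] := IH e' (leq_trans (mu_lt me me' ie' (conj l1 l2) n2) hn) me' ie'.
have [k2 [es2 [h2a h2b h2c h2d]]] := IH e'' (leq_trans (mu_lt me me'' ie'' le'' n2'') hn) me'' ie''.
exists (k1 + k2)%N, (fun i => match split i with inl a => es1 a | inr b => es2 b end).
split.
- by move=> i; case: (split_ordP i) => a _; [apply: h1a | apply: h2a].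
- move=> i j; case: (split_ordP i) => a ->; case: (split_ordP j) => b -> ij.
  + by apply: h1b; rewrite eq_lshift in ij.
  + move=> p; case: (h1c a) => _ ha; case: (h2c b) => hb _.
    by rewrite /pcomp -(ha p) -(hb p) /pcomp -compA [comp (e' p) _]compA o1 comp0l comp0r.
  + move=> p; case: (h2c a) => _ ha; case: (h1c b) => hb _.
    by rewrite /pcomp -(ha p) -(hb p) /pcomp -compA [comp (e'' p) _]compA o2 comp0l comp0r.
  + by apply: h2b; rewrite eq_rshift in ij.
- move=> i; case: (split_ordP i) => a _.
    by apply: ple_trans (h1c a) (conj l1 l2).
  by apply: ple_trans (h2c a) le''.
- move=> p; rewrite big_split_ord /=.
  under eq_bigr => i _ do rewrite split_lshift.
  under [X in _ + X]eq_bigr => i _ do rewrite split_rshift.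
  by rewrite h1d h2d /e'' addrC subrK.
Qed.

End Measure.

End Decomp.

Section Final.
Variables (F : fieldType) (C : LinAbCat F).

Lemma pidem_split_fam (P : pobj C) (I : Type) (es : I -> pfam P P) :
  (forall i, is_pmor (es i) /\ idem (es i)) ->
  exists (Y : I -> pobj C) (kk : forall i, pfam (Y i) P) (rr : forall i, pfam P (Y i)),
  forall i, [/\ is_pmor (kk i), is_pmor (rr i), forall p, comp (rr i p) (kk i p) = idm _,
     forall p, comp (kk i p) (rr i p) = es i p
   & forall p, is_iso (pphi P p) -> is_iso (pphi (Y i) p)].
Proof.
move=> h.
have H i := pidem_split (proj1 (h i)) (proj2 (h i)).
exists (fun i => proj1_sig (cid (H i))).
exists (fun i => proj1_sig (cid (proj2_sig (cid (H i))))).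
exists (fun i => proj1_sig (cid (proj2_sig (cid (proj2_sig (cid (H i))))))).
move=> i; exact: (proj2_sig (cid (proj2_sig (cid (proj2_sig (cid (H i))))))).
Qed.

Lemma part1 (P : pobj C) : tempered P ->
  exists (n : nat) (Y : 'I_n -> pobj C) (S : pobj C)
         (i : forall k, pfam (Y k) S) (pr : forall k, pfam S (Y k)),
    [/\ forall k, tempered (Y k) /\ indecomposable (Y k),
        tempered S, is_dsum i pr & p_iso P S].
Proof.
move=> tP; have [s hs] := tP.
have [W hW] := window s.
have det : forall f h : pfam P P, is_pmor f -> is_pmor h ->
    (forall p, p \in W -> f p = h p) -> peq f h.
  move=> f h mf mh hw p.
  apply: (hW (fun p => is_iso (pphi P p)) (fun p => f p = h p)) => //.
  - by move=> p0 iso0; exact: (proj1 (pmor_det mf mh iso0)).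
  - by move=> p0 iso0; exact: (proj2 (pmor_det mf mh iso0)).
have idP : idem (pid P) by move=> p; rewrite /pid comp1m.
have [k [es [ha hb hc hd]]] := decomp_idem det (ltnSn (mu W (pid P))) (@pmor_id _ _ P) idP.
have hes : forall i, is_pmor (es i) /\ idem (es i).
  by move=> i; case: (ha i).
have [Y [kk [rr hY]]] := pidem_split_fam hes.
have rre i p : comp (rr i p) (es i p) = rr i p.
  by case: (hY i) => _ _ h1 h2 _; rewrite -h2 compA h1 comp1m.
have ekk i p : comp (es i p) (kk i p) = kk i p.
  by case: (hY i) => _ _ h1 h2 _; rewrite -h2 -compA h1 compm1.
exists k, Y, P, kk, rr; split => //.
- move=> i; case: (hY i) => mk mr h1 h2 iso.
  have tY : tempered (Y i) by exists s => p /hs; apply: iso.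
  split => //.
  case: (ha i) => mei iei [nz pr].
  apply: indec_of_idem => //.
    move=> h0; apply: nz => p.
    have h0p : idm (pX (Y i) p) = 0 := h0 p.
    by rewrite /pzero -h2 -[rr i p]comp1m h0p comp0l comp0r.
  move=> f mf ief.
  have {}ief p : comp (f p) (f p) = f p := ief p.
  pose g := pcomp (kk i) (pcomp f (rr i)).
  have mg : is_pmor g by do 2! apply: pmor_comp => //.
  have fg p : comp (rr i p) (comp (g p) (kk i p)) = f p.
    by rewrite /g /pcomp !compA h1 comp1m -compA h1 compm1.
  have ig : idem g.
    move=> p; rewrite /g /pcomp -!compA [comp (rr i p) (comp (kk i p) _)]compA h1 comp1m.
    by rewrite [comp (f p) (comp (f p) _)]compA ief.
  have lg : ple g (es i).
    split=> p; rewrite /pcomp /g /pcomp.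
      by rewrite -h2 -compA [comp (rr i p) (comp (kk i p) _)]compA h1 comp1m.
    by rewrite -h2 -!compA [comp (rr i p) (comp (kk i p) _)]compA h1 comp1m.
  case: (pr g mg ig lg) => hg; [left | right] => p.
    by rewrite /pzero -fg (hg p) /pzero comp0l comp0r.
  by rewrite /pid -fg (hg p) -h2 -compA h1 compm1 h1.
- split.
  + by move=> i; case: (hY i).
  + by move=> i p; case: (hY i) => _ _ h1 _ _; apply: h1.
  + move=> i j ij p; rewrite /pcomp /pzero -rre -ekk -compA [comp (es i p) (comp _ _)]compA.
    have hij : comp (es i p) (es j p) = 0 := hb i j ij p.
    by rewrite hij comp0l comp0r.
  + move=> p; transitivity (\sum_(i0 < k) es i0 p); last exact: (hd p).
    apply: eq_bigr => i _.
    by case: (hY i) => _ _ _ h2 _; apply: h2.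
- exists (pid P), (pid P); split; try apply: pmor_id; by move=> p; rewrite /pcomp /pid comp1m.
Qed.

End Final.

Theorem proposition2p7 (F : fieldType) (C : LinAbCat F) :
  tempered_KrullSchmidt C.
Proof.
split; first exact: part1.
by move=> P tP hP; apply: local_of_indec.
Qed.
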